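(* Let $n\le N$, let $\Xi$ be the set of designs $\{(\boldsymbol{x}_i,w_i):i=1,\ldots,N\}$ with $0\le w_i\le1/n$ and $\sum_iw_i=1$, let $\Phi\in\Lambda$, and let $\xi^*\in\Xi$ satisfy $\Phi(\xi^* )=\min_{\xi\in\Xi}\Phi(\xi)$. Let $\epsilon>0$ and let $\xi_\epsilon=\{(\boldsymbol{x}_i,w_i)\}\in\Xi$ with $\Phi(\xi_\epsilon)<\infty$. Suppose there is a partition $\mathcal{X}=\mathcal{X}_1\cup\mathcal{X}_2\cup\mathcal{X}_3$ of $\{\boldsymbol{x}_1,\ldots,\boldsymbol{x}_N\}$ such that (a) $w_i=0$ for $\boldsymbol{x}_i\in\mathcal{X}_1$ and $w_i=1/n$ for $\boldsymbol{x}_i\in\mathcal{X}_3$; (b) if $\mathcal{X}_2=\emptyset$, then $\max_{\boldsymbol{x}_i\in\mathcal{X}_3}F_\Phi(\xi_\epsilon;\boldsymbol{x}_i)\le\min_{\boldsymbol{x}_i\in\mathcal{X}_1}F_\Phi(\xi_\epsilon;\boldsymbol{x}_i)+\epsilon$; (c) if $\mathcal{X}_2\ne\emptyset$, then there is a number $s$ such that for every $\boldsymbol{x}_i\in\mathcal{X}_2$: (i) $0<w_i<1/n$; (ii) $s-\epsilon/2<F_\Phi(\xi_\epsilon;\boldsymbol{x}_i)<s+\epsilon/2$; and (iii) $\max_{\boldsymbol{x}_j\in\mathcal{X}_3}F_\Phi(\xi_\epsilon;\boldsymbol{x}_j)\le s+\epsilon/2$ and $s-\epsilon/2\le\min_{\boldsymbol{x}_j\in\mathcal{X}_1}F_\Phi(\xi_\epsilon;\boldsymbol{x}_j)$.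 Then $\xi_\epsilon$ is an $\epsilon$-approximation of a $\Phi$-optimal design, i.e. $\Phi(\xi_\epsilon)-\Phi(\xi^* )\le\epsilon$. (Maximum over the empty set is $-\infty$, minimum over the empty set is $+\infty$.)
   Context: Designs $\xi=\{(\boldsymbol{x}_i,w_i)\}$ on $\mathcal{X}=\{\boldsymbol{x}_1,\ldots,\boldsymbol{x}_N\}$ with $w_i\ge0$, $\sum w_i=1$; $M(\xi)=\sum_iw_iI_{\boldsymbol\theta}(\boldsymbol{x}_i)$ with symmetric PSD $I_{\boldsymbol\theta}(\boldsymbol{x}_i)$; $\Phi(\xi)$ is a criterion of $M(\xi)$ ($+\infty$ when undefined). $F_\Phi(\xi,\eta)=\lim_{\alpha\downarrow0}[\Phi((1-\alpha)\xi+\alpha\eta)-\Phi(\xi)]/\alpha$; $F_\Phi(\xi;\boldsymbol{x}_i)=F_\Phi(\xi,\delta_{\boldsymbol{x}_i})$ with $\delta_{\boldsymbol{x}_i}$ the one-point design at $\boldsymbol{x}_i$. $\Lambda$: criteria convex in the weights, linearly differentiable ($F_\Phi(\xi,\eta)=\sum_i\lambda_iF_\Phi(\xi;\boldsymbol{x}_i)$ for $\eta=\{(\boldsymbol{x}_i,\lambda_i)\}$ whenever $\Phi(\xi)<\infty$), and infinitely differentiable along line segments of designs. A design $\xi$ is an $\epsilon$-approximation of an optimal design $\xi^*$ if $\Phi(\xi)-\Phi(\xi^* )\le\epsilon$. *)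

(* Defs.v *)
From HB Require Import structures.
From mathcomp Require Import all_boot all_order all_algebra.
From mathcomp Require Import all_classical all_reals all_analysis.
Set Implicit Arguments. Unset Strict Implicit. Unset Printing Implicit Defensive.
Import Order.TTheory GRing.Theory Num.Theory.
Import numFieldNormedType.Exports.
Local Open Scope ring_scope.
Local Open Scope classical_set_scope.

Section Defs.
Variables (R : realType) (N : nat).

(* A design on X = {x_1,...,x_N} is identified with its weight vector. *)
Definition design (w : 'I_N -> R) : Prop :=
  (forall i, 0 <= w i) /\ \sum_(i < N) w i = 1.

Definition Xi_design (n : nat) (w : 'I_N -> R) : Prop :=
  (forall i, 0 <= w i <= n%:R^-1) /\ \sum_(i < N) w i = 1.

Definition delta (i : 'I_N) : 'I_N -> R := fun j => if j == i then 1 else 0.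

Definition seg (xi eta : 'I_N -> R) (a : R) : 'I_N -> R :=
  fun j => (1 - a) * xi j + a * eta j.

Definition info_mx (p : nat) (I : 'I_N -> 'M[R]_p) (w : 'I_N -> R) : 'M[R]_p :=
  \sum_(i < N) w i *: I i.

Definition symPSD (p : nat) (A : 'M[R]_p) : Prop :=
  A^T = A /\ forall v : 'rV[R]_p, 0 <= (v *m A *m v^T) 0 0.

Definition convex_in_weights (Phi : ('I_N -> R) -> \bar R) : Prop :=
  forall xi eta a, design xi -> design eta -> 0 <= a <= 1 ->
    (Phi (seg xi eta a) <= (1 - a)%:E * Phi xi + a%:E * Phi eta)%E.

Definition is_dir_deriv (Phi : ('I_N -> R) -> \bar R)
    (F : ('I_N -> R) -> ('I_N -> R) -> R) : Prop :=
  forall xi eta, design xi -> design eta -> (Phi xi < +oo)%E ->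
    (fun a : R => ((Phi (seg xi eta a) - Phi xi) * (a^-1)%:E)%E) @ 0^'+
      --> (F xi eta)%:E.

Definition lin_diff (Phi : ('I_N -> R) -> \bar R)
    (F : ('I_N -> R) -> ('I_N -> R) -> R) : Prop :=
  forall xi eta, design xi -> design eta -> (Phi xi < +oo)%E ->
    F xi eta = \sum_(i < N) eta i * F xi (delta i).

Definition smooth_on_segments (Phi : ('I_N -> R) -> \bar R) : Prop :=
  forall xi eta a, design xi -> design eta -> 0 < a < 1 ->
    (Phi (seg xi eta a) < +oo)%E ->
    forall k : nat,
      derivable (derive1n k (fun b : R => fine (Phi (seg xi eta b)))) a 1.

Definition in_Lambda (Phi : ('I_N -> R) -> \bar R)
    (F : ('I_N -> R) -> ('I_N -> R) -> R) : Prop :=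
  (forall w, (-oo < Phi w)%E) /\
  convex_in_weights Phi /\ is_dir_deriv Phi F /\ lin_diff Phi F /\
  smooth_on_segments Phi.

End Defs.
Arguments delta {R N} i _.

(* Main.v *)
Require Import Defs.
From HB Require Import structures.
From mathcomp Require Import all_boot all_order all_algebra.
From mathcomp Require Import ring lra.
From mathcomp Require Import all_classical all_reals all_analysis.
Import Order.TTheory GRing.Theory Num.Theory.
Import numFieldNormedType.Exports.
Local Open Scope ring_scope.

Lemma core_ineq (R : realType) (N : nat) (f xs w : 'I_N -> R) (c eps : R) :
  0 <= eps -> (forall i, 0 <= w i) -> (forall i, 0 <= xs i) ->
  \sum_(i < N) xs i = 1 -> \sum_(i < N) w i = 1 ->
  (forall i, (xs i - w i <= 0 /\ f i <= c) \/ (0 <= xs i - w i /\ c - eps <= f i)) ->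
  - eps <= \sum_(i < N) (xs i - w i) * f i.
Proof.
move=> e0 w0 x0 sx sw H.
have -> : \sum_(i < N) (xs i - w i) * f i =
  \sum_(i < N) ((xs i - w i) * (f i - c) + c * (xs i - w i)).
  by apply: eq_bigr => i _; ring.
rewrite big_split /= -mulr_sumr sumrB sx sw subrr mulr0 addr0.
have -> : - eps = \sum_(i < N) (- eps * xs i) by rewrite -mulr_sumr sx mulr1.
apply: ler_sum => i _.
have := w0 i; have := x0 i.
case: (H i) => [[h1 h2]|[h1 h2]] => hx hw; nra.
Qed.

Lemma le_bigmaxe (R : realType) (N : nat) (A : {set 'I_N}) (g : 'I_N -> \bar R) j :
  j \in A -> (g j <= \big[maxe/-oo%E]_(i in A) g i)%E.
Proof. by move=> jA; rewrite (bigD1 j) //= le_max lexx. Qed.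

Lemma ge_bigmine (R : realType) (N : nat) (A : {set 'I_N}) (g : 'I_N -> \bar R) j :
  j \in A -> (\big[mine/+oo%E]_(i in A) g i <= g j)%E.
Proof. by move=> jA; rewrite (bigD1 j) //= ge_min lexx. Qed.

Lemma bigmaxe_ny (R : realType) (N : nat) (A : {set 'I_N}) (g : 'I_N -> R) :
  \big[maxe/-oo%E]_(i in A) (g i)%:E != +oo%E.
Proof.
apply: (big_ind (fun x : \bar R => x != +oo%E)) => //.
by move=> x y; case: x => [x||] //; case: y => [y||] //=; rewrite /Order.max /=; case: ifP.
Qed.

Theorem theorem4 (R : realType) (N n p : nat) (hnN : (n <= N)%N)
  (I : 'I_N -> 'M[R]_p) (hI : forall i, symPSD (I i))
  (phi : 'M[R]_p -> \bar R)
  (F : ('I_N -> R) -> ('I_N -> R) -> R)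
  (hLam : in_Lambda (fun w => phi (info_mx I w)) F)
  (xi_star : 'I_N -> R) (hstar : Xi_design n xi_star)
  (hopt : forall xi, Xi_design n xi ->
     (phi (info_mx I xi_star) <= phi (info_mx I xi))%E)
  (eps : R) (heps : 0 < eps)
  (w : 'I_N -> R) (hw : Xi_design n w)
  (hfin : (phi (info_mx I w) < +oo)%E)
  (X1 X2 X3 : {set 'I_N})
  (hpart : [/\ X1 :|: X2 :|: X3 = [set: 'I_N], X1 :&: X2 = finset.set0,
              X1 :&: X3 = finset.set0 & X2 :&: X3 = finset.set0])
  (ha : (forall i, i \in X1 -> w i = 0) /\
        (forall i, i \in X3 -> w i = n%:R^-1))
  (hb : X2 = finset.set0 ->
     (\big[maxe/-oo%E]_(i in X3) (F w (delta i))%:E <=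
      \big[mine/+oo%E]_(i in X1) (F w (delta i))%:E + eps%:E)%E)
  (hc : X2 != finset.set0 ->
     exists s : R, forall i, i \in X2 ->
       [/\ 0 < w i < n%:R^-1,
           s - eps / 2 < F w (delta i) < s + eps / 2,
           (\big[maxe/-oo%E]_(j in X3) (F w (delta j))%:E <= (s + eps / 2)%:E)%E
         & ((s - eps / 2)%:E <= \big[mine/+oo%E]_(j in X1) (F w (delta j))%:E)%E]) :
  (phi (info_mx I w) - phi (info_mx I xi_star) <= eps%:E)%E.
Proof.
have [Pgt [Pconv [Pder [Plin _]]]] := hLam.
have des : forall v : 'I_N -> R, Xi_design n v -> design v.
  by move=> v [h1 h2]; split; [move=> i; have /andP[] := h1 i | ].
have dw := des _ hw; have ds := des _ hstar.
have hsfin : (phi (info_mx I xi_star) < +oo)%E := le_lt_trans (hopt w hw) hfin.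
have [ra Ea] : exists r, phi (info_mx I w) = r%:E.
  by move: (Pgt w) hfin => /=; case: (phi _) => [r||] //; exists r.
have [rb Eb] : exists r, phi (info_mx I xi_star) = r%:E.
  by move: (Pgt xi_star) hsfin => /=; case: (phi _) => [r||] //; exists r.
set f := fun i => F w (delta i).
have Fww : F w w = 0.
  have hd := Pder w w dw dw hfin.
  have E0 : (fun a : R => ((phi (info_mx I (seg w w a)) - phi (info_mx I w)) * (a^-1)%:E)%E)
            = fun _ => 0%E.
    apply/funext => a; have -> : seg w w a = w by apply/funext => j; rewrite /seg; ring.
    by rewrite Ea -EFinD subrr mul0e.
  rewrite /= E0 in hd.
  apply/eqP; rewrite eq_le -!lee_fin; apply/andP; split.
    by apply: (cvge_to_le hd); near=> x.
  by apply: (cvge_to_ge hd); near=> x.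
have Fws : F w xi_star <= rb - ra.
  rewrite -lee_fin; apply: (cvge_to_le (Pder w xi_star dw ds hfin)).
  near=> x.
  have x0 : 0 < x by near: x; exact: nbhs_right_gt.
  have x1 : x < 1 by near: x; apply: nbhs_right_lt; exact: ltr01.
  have hcv := Pconv w xi_star x dw ds (ltac:(apply/andP; split; exact: ltW)).
  rewrite /= Ea Eb -!EFinM -EFinD in hcv.
  move: hcv (Pgt (seg w xi_star x)) => /=; case: (phi _) => [rs||] //= hcv _.
  rewrite Ea -EFinD -EFinM lee_fin ler_pdivrMr //.
  rewrite lee_fin in hcv; nra.
have Ls := Plin w xi_star dw ds hfin.
have Lw := Plin w w dw dw hfin.
rewrite Fww in Lw.
have key : - eps <= \sum_(i < N) (xi_star i - w i) * f i.
  have [hP1 hP12 hP13 hP23] := hpart.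
  have mem : forall i, [\/ i \in X1, i \in X2 | i \in X3].
    move=> i; have : i \in [set: 'I_N] by rewrite inE. rewrite -hP1 !inE => /orP[/orP[h|h]|h].
    - by constructor 1. - by constructor 2. - by constructor 3.
  have xsb : forall i, 0 <= xi_star i <= n%:R^-1 by case: hstar.
  have wb : forall i, 0 <= w i <= n%:R^-1 by case: hw.
  have w0 : forall i, 0 <= w i by move=> i; have /andP[] := wb i.
  have x0 : forall i, 0 <= xi_star i by move=> i; have /andP[] := xsb i.
  have [X2e|X2ne] := eqVneq X2 finset.set0.
  - have hb' := hb X2e.
    move: hb'; set M := \big[maxe/-oo%E]_(i in X3) _; set m := \big[mine/+oo%E]_(i in X1) _.
    move=> hb'.
    have Mny : M != +oo%E by exact: bigmaxe_ny.
    have maxb : forall j, j \in X3 -> ((f j)%:E <= M)%E.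
      by move=> j jX; rewrite /M /f; apply: le_bigmaxe.
    have minb : forall j, j \in X1 -> (m <= (f j)%:E)%E.
      by move=> j jX; rewrite /m /f; apply: ge_bigmine.
    move: hb' Mny maxb; case: M => [r||] // hb' _ maxb.
    + apply: (@core_ineq _ _ _ _ _ r) => //; [exact: ltW | by case: ds | by case: dw|].
      move=> i; case: (mem i) => h.
      * right; rewrite (ha.1 i h) subr0; split; first exact: x0.
        have := le_trans hb' (leeD2r eps%:E (minb i h)).
        by rewrite -EFinD lee_fin => ?; lra.
      * by rewrite X2e inE in h.
      * left; rewrite (ha.2 i h); have /andP[_ ?] := xsb i; split; first lra.
        by rewrite -lee_fin; exact: maxb.
    + exfalso.
      have : \sum_(i < N) w i = 0.
        apply: big1 => i _; case: (mem i) => h.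
        * exact: ha.1.
        * by rewrite X2e inE in h.
        * by have := maxb i h.
      by case: dw => _ ->; apply/eqP; exact: oner_neq0.
  - have [s hs] := hc X2ne.
    have [i0 i0X] := set0Pn _ X2ne.
    have [_ _ maxb minb] := hs i0 i0X.
    apply: (@core_ineq _ _ _ _ _ (s + eps / 2)) => //; [exact: ltW | by case: ds | by case: dw|].
    move=> i; case: (mem i) => h.
    + right; rewrite (ha.1 i h) subr0; split; first exact: x0.
      have := le_trans minb (@ge_bigmine _ _ _ (fun i => (F w (delta i))%:E) _ h).
      by rewrite lee_fin /f => ?; lra.
    + have [_ /andP[l u] _ _] := hs i h.
      have [hd|hd] := lerP 0 (xi_star i - w i).
      * by right; split => //; rewrite /f; lra.
      * by left; split; rewrite /f; lra.
    + left; rewrite (ha.2 i h); have /andP[_ ?] := xsb i; split; first lra.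
      by rewrite -lee_fin; apply: le_trans maxb; exact: (@le_bigmaxe _ _ _ (fun i => (F w (delta i))%:E) _ h).
have : \sum_(i < N) (xi_star i - w i) * f i = F w xi_star.
  rewrite Ls; have -> : \sum_(i < N) xi_star i * F w (delta i) =
    \sum_(i < N) xi_star i * F w (delta i) - \sum_(i < N) w i * F w (delta i) by rewrite -Lw subr0.
  by rewrite -sumrB; apply: eq_bigr => i _; rewrite /f mulrBl.
move=> Hs; rewrite Ea Eb -EFinD lee_fin.
move: key Fws; rewrite Hs => k1 k2.
clear -k1 k2; lra.
Unshelve. all: by end_near.
Qed.
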